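(* Let $A$ be a finite set and let $(v_{xy})$ be a Llull matrix on $A$ with CLC structure, and let $\xi$ be any admissible order for it. (1) Suppose $t_{xy}>0$ for all distinct $x,y\in A$, and let $q_{xy}=v_{xy}/t_{xy}$. Then $q_{xy}\ge q_{yx}$ whenever $x<_\xi y$, and $q_{xz}\ge q_{yz}$ and $q_{zx}\le q_{zy}$ whenever $x<_\xi y$ and $z\notin\{x,y\}$. Moreover, the top dominant irreducible component $X$ of $A$ for $(v_{xy})$ is also a top dominant irreducible component of $A$ for $(q_{xy})$, and $q_{xy}>0$ whenever $x\in X$ and $y\neq x$. (2) Suppose $t_{xy}=0$ for some distinct $x,y\in A$. Then there exists $Y\subseteq A$ such that $t_{x\bar x}>0$ for all distinct $x,\bar x\notin Y$, and $v_{yx}=0$ for all $y\in Y$ and all $x\neq y$.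
   Context: A Llull matrix on a finite set $A$ is an assignment to each ordered pair of distinct elements $x\neq y$ of $A$ of a number $v_{xy}\in[0,1]$ such that $v_{xy}+v_{yx}\le 1$. Turnouts: $t_{xy}=v_{xy}+v_{yx}$; margins: $m_{xy}=v_{xy}-v_{yx}$. The matrix has CLC structure if there is a total order $\xi$ on $A$ (an admissible order) such that, writing $x<_\xi y$ when $x$ precedes $y$ and $x'$ for the immediate successor of $x$ in $\xi$ (when it exists): (i) $v_{xy}\ge v_{yx}$ whenever $x<_\xi y$; (ii) $v_{xz}=\max(v_{xy},v_{yz})$ whenever $x<_\xi y<_\xi z$; (iii) $v_{zx}=\min(v_{zy},v_{yx})$ whenever $x<_\xi y<_\xi z$; (iv) $0\le t_{xz}-t_{x'z}\le m_{xx'}$ whenever $x'$ exists and $z\notin\{x,x'\}$. For any Llull matrix $(w_{xy})$: indirect scores $\hat w_{xy}=\max$ over paths $x=x_0,\dots,x_n=y$ of $\min_i w_{x_ix_{i+1}}$; irreducible components are classes of $x\sim y$ iff $x=y$ or ($\hat w_{xy}>0$ and $\hat w_{yx}>0$); $x$ dominates $y$ iff $\hat w_{xy}>0$ and $\hat w_{yx}=0$, which passes to components; a top dominant irreducible component is one dominating every other component. A non-vanishing Llull matrix with CLC structure has a (unique) top dominant irreducible component. *)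

(* Defs.v *)
From mathcomp Require Import all_boot all_order all_algebra.
Set Implicit Arguments. Unset Strict Implicit. Unset Printing Implicit Defensive.
Import Order.TTheory GRing.Theory Num.Theory.
Local Open Scope ring_scope.

Section Llull.
Variables (R : realFieldType) (T : finType).

Definition llull (w : T -> T -> R) : Prop :=
  forall x y, x != y -> [/\ 0 <= w x y, w x y <= 1 & w x y + w y x <= 1].

Definition turnout (w : T -> T -> R) x y : R := w x y + w y x.
Definition margin  (w : T -> T -> R) x y : R := w x y - w y x.

Definition strict_total (lt : rel T) : Prop :=
  [/\ forall x, ~~ lt x x,
      forall x y z, lt x y -> lt y z -> lt x z &
      forall x y, x != y -> lt x y || lt y x].

Definition imm_succ (lt : rel T) (x y : T) : Prop :=
  lt x y /\ forall z, ~ (lt x z /\ lt z y).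

Definition admissible (v : T -> T -> R) (lt : rel T) : Prop :=
  [/\ strict_total lt,
      (forall x y, lt x y -> v y x <= v x y),
      (forall x y z, lt x y -> lt y z -> v x z = Num.max (v x y) (v y z)),
      (forall x y z, lt x y -> lt y z -> v z x = Num.min (v z y) (v y x)) &
      (forall x x' z, imm_succ lt x x' -> z != x -> z != x' ->
         0 <= turnout v x z - turnout v x' z /\
         turnout v x z - turnout v x' z <= margin v x x')].

Definition has_CLC (v : T -> T -> R) : Prop := exists lt, admissible v lt.

(* Minimum of the weights along the path x = x_0, x_1, ..., x_n (p = [x_1;...;x_n],
   n >= 1); only meaningful for nonempty p. *)
Fixpoint path_min (w : T -> T -> R) (x : T) (p : seq T) : R :=
  match p with
  | [::] => 0
  | y :: p' => match p' with
               | [::] => w x y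
               | _ :: _ => Num.min (w x y) (path_min w y p')
               end
  end.

Definition is_ind_score (w : T -> T -> R) (x y : T) (r : R) : Prop :=
  (exists p : seq T, p != [::] /\ last x p = y /\ path_min w x p = r) /\
  (forall p : seq T, p != [::] -> last x p = y -> path_min w x p <= r).

Definition ind_pos (w : T -> T -> R) x y : Prop :=
  exists r, is_ind_score w x y r /\ 0 < r.

Definition ind_zero (w : T -> T -> R) x y : Prop := is_ind_score w x y 0.

Definition irr_equiv (w : T -> T -> R) x y : Prop :=
  x = y \/ (ind_pos w x y /\ ind_pos w y x).

Definition dominates (w : T -> T -> R) x y : Prop :=
  ind_pos w x y /\ ind_zero w y x.

Definition irr_component (w : T -> T -> R) (X : {set T}) : Prop :=
  exists x, forall y, y \in X <-> irr_equiv w x y.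

Definition comp_dominates (w : T -> T -> R) (X Y : {set T}) : Prop :=
  exists x y, [/\ x \in X, y \in Y & dominates w x y].

Definition top_dominant (w : T -> T -> R) (X : {set T}) : Prop :=
  irr_component w X /\
  forall Y, irr_component w Y -> Y != X -> comp_dominates w X Y.

End Llull.

(* Main.v *)
Require Import Defs.
From mathcomp Require Import all_boot all_order all_algebra.
From Stdlib Require Import Classical ClassicalEpsilon.
From mathcomp Require Import ring lra.
Import Order.TTheory GRing.Theory Num.Theory.
Local Open Scope ring_scope.
Set Implicit Arguments. Unset Strict Implicit.

Definition asb (P : Prop) : bool := if excluded_middle_informative P then true else false.
Lemma asbP (P : Prop) : asb P <-> P.
Proof. by rewrite /asb; case: excluded_middle_informative. Qed.

Lemma path_min_in (R : realFieldType) (T : finType) (w : T -> T -> R) p x :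
  p != [::] -> exists a b, path_min w x p = w a b.
Proof.
elim: p x => [//|y p IH] x _ /=.
case: p IH => [|z p] IH; first by exists x, y.
have [a [b ->]] := IH y isT.
rewrite /Order.min; case: ifP => _; [by exists x, y | by exists a, b].
Qed.

Lemma seq_max (R : realFieldType) (s : seq R) (P : R -> Prop) :
  (forall r, P r -> r \in s) -> (exists r, P r) ->
  exists r, P r /\ forall r', P r' -> r' <= r.
Proof.
elim: s P => [|a s IH] P Hs [r Pr]; first by have := Hs _ Pr.
case: (classic (exists r, P r /\ r != a)) => [[r0 [Pr0 Hr0]]|H].
  have [m [[Pm Hm] Hmax]] : exists m, (P m /\ m != a) /\
      forall r', (P r' /\ r' != a) -> r' <= m.
    apply: IH; last by exists r0.
    move=> r' [Pr' Hr']; have := Hs _ Pr'; by rewrite inE (negbTE Hr').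
  case: (classic (P a)) => Pa.
    exists (Num.max a m); split; first by rewrite /Order.max; case: ifP.
    move=> r' Pr'; case: (eqVneq r' a) => [->|ne]; first by rewrite le_max lexx.
    by rewrite le_max (Hmax r') ?orbT.
  exists m; split => // r' Pr'; apply: Hmax; split => //.
  by apply/eqP => e; apply: Pa; rewrite -e.
have Pa : P a.
  case: (eqVneq r a) => [<-//|ne]; by exfalso; apply: H; exists r.
exists a; split => // r' Pr'; case: (eqVneq r' a) => [->//|ne].
by exfalso; apply: H; exists r'.
Qed.

Lemma score_exists (R : realFieldType) (T : finType) (w : T -> T -> R) x y :
  exists r, is_ind_score w x y r.
Proof.
pose P r := exists p : seq T, p != [::] /\ last x p = y /\ path_min w x p = r.
have H1 : forall r, P r -> r \in [seq w ab.1 ab.2 | ab <- enum {: T * T}].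
  move=> r [p [pn [_ <-]]]; have [a [b ->]] := path_min_in w x pn.
  by apply/mapP; exists (a, b); rewrite ?mem_enum.
have H2 : exists r, P r by exists (w x y), [:: y].
have [r [Pr Hr]] := seq_max H1 H2.
exists r; split => // p pn lp; apply: Hr; by exists p.
Qed.

Lemma path_min_pos (R : realFieldType) (T : finType) (w : T -> T -> R) p x :
  p != [::] -> (0 < path_min w x p) = path (fun a b => 0 < w a b) x p.
Proof.
elim: p x => [//|y p IH] x _ /=.
case: p IH => [|z p] IH; first by rewrite andbT.
by rewrite lt_min IH.
Qed.

Definition reach (R : realFieldType) (T : finType) (w : T -> T -> R) x y :=
  exists p : seq T, p != [::] /\ last x p = y /\
    path (fun a b => (a != b) && (0 < w a b)) x p.

Lemma drop_diag (R : realFieldType) (T : finType) (w : T -> T -> R) p x y :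
  p != [::] -> last x p = y -> x != y -> path (fun a b => 0 < w a b) x p ->
  reach w x y.
Proof.
elim: p x => [//|b p IH] x _ /= lp xy /andP[wxb pp].
case: p IH lp pp => [|c p] IH lp pp.
  simpl in lp; subst b; exists [:: y]; split => //; split => //=.
  by rewrite xy wxb.
case: (eqVneq b y) => [eby|nby].
  exists [:: y]; split => //; split => //=.
  by rewrite xy -eby wxb.
case: (eqVneq x b) => [exb|nxb].
  subst b; exact: (IH x isT lp xy pp).
have [p' [p'n [lp' pp']]] := IH b isT lp nby pp.
by exists (b :: p'); rewrite /= nxb wxb.
Qed.

Lemma reach_trans (R : realFieldType) (T : finType) (w : T -> T -> R) x y z :
  reach w x y -> reach w y z -> reach w x z.
Proof.
move=> [p1 [n1 [l1 p1p]]] [p2 [n2 [l2 p2p]]].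
exists (p1 ++ p2); split; first by rewrite -size_eq0 size_cat addn_eq0 size_eq0 (negbTE n1).
by rewrite last_cat l1 cat_path p1p l1.
Qed.

Lemma reach_edge (R : realFieldType) (T : finType) (w : T -> T -> R) x y :
  x != y -> 0 < w x y -> reach w x y.
Proof. by move=> xy wp; exists [:: y]; rewrite /= xy wp. Qed.

Lemma reach_ext (R : realFieldType) (T : finType) (w w' : T -> T -> R) x y :
  (forall a b, a != b -> (0 < w a b) = (0 < w' a b)) -> reach w x y -> reach w' x y.
Proof.
move=> H [p [n [l pp]]]; exists p; split => //; split => //.
rewrite -(@eq_path _ (fun a b => (a != b) && (0 < w a b))) // => a b.
by case: (eqVneq a b) => //= /H.
Qed.

Lemma reach_path (R : realFieldType) (T : finType) (w : T -> T -> R) x y :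
  reach w x y -> exists p, p != [::] /\ last x p = y /\ 0 < path_min w x p.
Proof.
move=> [p [n [l pp]]]; exists p; split => //; split => //.
by rewrite path_min_pos //; apply: sub_path pp => a b /andP[].
Qed.

Lemma ind_pos_reach (R : realFieldType) (T : finType) (w : T -> T -> R) x y :
  x != y -> (ind_pos w x y <-> reach w x y).
Proof.
move=> xy; split.
  move=> [r [[[p [pn [lp pm]]] _] rp]]; apply: (drop_diag pn lp xy).
  by rewrite -path_min_pos // pm.
move=> /reach_path [p [pn [lp pm]]].
have [r [Hr1 Hr2]] := score_exists w x y.
exists r; split => //; apply: lt_le_trans pm (Hr2 _ pn lp).
Qed.

Lemma ind_zero_reach (R : realFieldType) (T : finType) (w : T -> T -> R) x y :
  x != y -> 0 <= w x y -> (ind_zero w x y <-> ~ reach w x y).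
Proof.
move=> xy w0; split.
  move=> [_ H] /reach_path [p [pn [lp pm]]].
  by have := H p pn lp; rewrite leNgt pm.
move=> nr; have [r [[p [pn [lp pm]]] Hr2]] := score_exists w x y.
have rle : r <= 0.
  rewrite leNgt; apply/negP => rp; apply: nr.
  apply: (drop_diag pn lp xy); by rewrite -path_min_pos // pm.
have rge : 0 <= r by apply: le_trans w0 (Hr2 [:: y] isT erefl).
rewrite /ind_zero; have -> : 0 = r by apply/eqP; rewrite eq_le rle rge.
split; [by exists p | exact: Hr2].
Qed.

Lemma dominates_neq (R : realFieldType) (T : finType) (w : T -> T -> R) x y :
  dominates w x y -> x != y.
Proof.
move=> [[r [[[p [pn [lp pm]]] _] rp]] [_ H]].
apply/eqP => exy; rewrite -exy in H.
by have := H p pn (etrans lp (esym exy)); rewrite pm leNgt rp.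
Qed.

Definition rank (T : finType) (lt : rel T) (c : T) : nat := #|[set d | lt d c]|.

Lemma rank_lt (T : finType) (lt : rel T) a b :
  strict_total lt -> lt a b -> (rank lt a < rank lt b)%N.
Proof.
move=> [irr tr tot] ab; apply: proper_card; apply/properP; split.
  by apply/subsetP => d; rewrite !inE => da; apply: tr da ab.
by exists a; rewrite !inE ?ab ?irr.
Qed.

Lemma lt_total_cases (T : finType) (lt : rel T) a b :
  strict_total lt -> [\/ a = b, lt a b | lt b a].
Proof.
move=> [irr tr tot]; case: (eqVneq a b) => [->|ne]; first by constructor 1.
by case/orP: (tot _ _ ne) => h; [constructor 2 | constructor 3].
Qed.

Lemma exists_pred (T : finType) (lt : rel T) a b :
  strict_total lt -> lt a b ->
  exists p, imm_succ lt p b /\ (a = p \/ lt a p).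
Proof.
move=> st ab.
case: (arg_maxnP (rank lt) (ab : (fun c => lt c b) a)) => p pb pmax.
exists p; split.
  split => // z [pz zb]; have := pmax z zb; rewrite /= leqNgt.
  by rewrite (rank_lt st pz).
case: (lt_total_cases a p st) => [->|h|h]; [by left|by right|].
by have := pmax a ab; rewrite /= leqNgt (rank_lt st h).
Qed.

Lemma exists_min (T : finType) (lt : rel T) (x : T) :
  strict_total lt -> exists m, forall z, z != m -> lt m z.
Proof.
move=> st.
case: (arg_minnP (rank lt) (isT : (fun _ => true) x)) => m _ mmin.
exists m => z zm; case: (lt_total_cases m z st) => [e|//|h].
  by rewrite e eqxx in zm.
by have := mmin z isT; rewrite leqNgt (rank_lt st h).
Qed.

Lemma chain (R : realFieldType) (T : finType) (v : T -> T -> R) (lt : rel T) z :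
  admissible v lt -> forall n b a, (rank lt b <= n)%N ->
  (a = b \/ lt a b) ->
  (forall c, (a = c \/ lt a c) -> (c = b \/ lt c b) -> c != z) ->
  turnout v b z <= turnout v a z.
Proof.
move=> [st _ _ _ H4]; elim=> [|n IH] b a rb [<-//|ab] Hc.
  by have := rank_lt st ab; rewrite ltnNge (leq_trans rb (leq0n _)).
have [p [pb ap]] := exists_pred st ab.
have pz : p != z by apply: Hc => //; right; case: pb.
have bz : b != z by apply: Hc; [right | left].
have zp : z != p by rewrite eq_sym.
have zb : z != b by rewrite eq_sym.
have [h1 _] := H4 p b z pb zp zb.
have le1 : turnout v b z <= turnout v p z by rewrite -subr_ge0.
apply: le_trans le1 _; apply: IH.
- by rewrite -ltnS; apply: leq_trans rb; apply: rank_lt st _; case: pb.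
- by case: ap => [->|h]; [left|right].
- move=> c ac cp; apply: Hc => //; right; case: cp => [->|h]; first by case: pb.
  by case: st => _ tr _; apply: tr h _; case: pb.
Qed.

Lemma nonneg (R : realFieldType) (T : finType) (v : T -> T -> R) a b :
  llull v -> a != b -> 0 <= v a b.
Proof. by move=> Hv ab; case: (Hv a b ab). Qed.

Lemma lt_neq (T : finType) (lt : rel T) a b : strict_total lt -> lt a b -> a != b.
Proof. by case=> irr _ _ ab; apply/eqP => e; rewrite e (negbTE (irr b)) in ab. Qed.

Lemma min_le_l (R : realFieldType) (a b : R) : Num.min a b <= a.
Proof. by rewrite ge_min lexx. Qed.
Lemma min_le_r (R : realFieldType) (a b : R) : Num.min a b <= b.
Proof. by rewrite ge_min lexx orbT. Qed.
Lemma max_ge_l (R : realFieldType) (a b : R) : a <= Num.max a b.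
Proof. by rewrite le_max lexx. Qed.
Lemma max_ge_r (R : realFieldType) (a b : R) : b <= Num.max a b.
Proof. by rewrite le_max lexx orbT. Qed.

Lemma zero_row (R : realFieldType) (T : finType) (v : T -> T -> R) (lt : rel T) a b :
  llull v -> admissible v lt -> lt a b -> turnout v a b <= 0 ->
  forall x, x != b -> v b x = 0.
Proof.
move=> Hv Hadm ab t0 x xb.
have Hadm' := Hadm; case: Hadm' => [st H1 H2 H3 H4].
have nab := lt_neq st ab.
have nba : b != a by rewrite eq_sym.
have va := nonneg Hv nab; have vb := nonneg Hv nba.
have vab0 : v a b = 0 by rewrite /turnout in t0; lra.
have vba0 : v b a = 0 by rewrite /turnout in t0; lra.
have vbx : 0 <= v b x by apply: nonneg Hv _; rewrite eq_sym.
apply/eqP; rewrite eq_le vbx andbT.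
case: (lt_total_cases x a st) => [->|xa|ax]; first by rewrite vba0.
  by rewrite (H3 _ _ _ xa ab) -vba0 min_le_l.
case: (lt_total_cases x b st) => [e|xb'|bx]; first by rewrite e eqxx in xb.
  apply: le_trans (H1 _ _ xb') _.
  by rewrite -vab0 (H2 _ _ _ ax xb') max_ge_r.
have ch := @chain R T v lt a Hadm (rank lt x) x b (leqnn _) (or_intror bx).
have tle : turnout v x a <= turnout v b a.
  apply: ch => c [<-|bc] _; first by rewrite eq_sym.
  case: st => [irr tr _]; apply/eqP => e; subst c.
  by have := tr _ _ _ ab bc; rewrite (negbTE (irr a)).
have vax0 : 0 <= v x a by apply: nonneg Hv _; rewrite eq_sym; apply: lt_neq st ax.
have vxa0 : 0 <= v a x by apply: nonneg Hv _; apply: lt_neq st ax.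
have vax : v a x <= 0 by move: tle; rewrite /turnout; lra.
apply: le_trans vax; rewrite (H2 _ _ _ ab bx) max_ge_r //.
Qed.

Lemma part2 (R : realFieldType) (T : finType) (v : T -> T -> R) (lt : rel T) :
  llull v -> admissible v lt ->
   exists Y : {set T},
     (forall x xb, x \notin Y -> xb \notin Y -> x != xb -> 0 < turnout v x xb) /\
     (forall y x, y \in Y -> x != y -> v y x = 0).
Proof.
move=> Hv Hadm; have st : strict_total lt by case: Hadm.
exists [set c | asb (forall x, x != c -> v c x = 0)]; split; last first.
  by move=> y x; rewrite inE => /asbP; apply.
move=> x xb xY xbY nx; rewrite ltNge; apply/negP => t0.
case: (lt_total_cases x xb st) => [e|h|h]; first by rewrite e eqxx in nx.
  by move/negP: xbY; apply; rewrite inE; apply/asbP; apply: zero_row Hv Hadm h t0.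
move/negP: xY; apply; rewrite inE; apply/asbP; apply: zero_row Hv Hadm h _.
by rewrite /turnout addrC.
Qed.

Lemma comp_reach (R : realFieldType) (T : finType) (w : T -> T -> R) c u u' :
  irr_equiv w c u -> irr_equiv w c u' -> u != u' -> reach w u u'.
Proof.
move=> [cu|[p1 p2]] [cu'|[p3 p4]] nu; subst.
- by rewrite eqxx in nu.
- by apply/ind_pos_reach.
- by apply/ind_pos_reach => //; rewrite eq_sym.
- case: (eqVneq u c) => [e|uc]; first by subst; apply/ind_pos_reach.
  case: (eqVneq c u') => [e|cu']; first by subst; apply/ind_pos_reach.
  by apply: (@reach_trans _ _ _ _ c); apply/ind_pos_reach.
Qed.

Lemma top_pos (R : realFieldType) (T : finType) (v : T -> T -> R) (lt : rel T)
  (X : {set T}) :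
  llull v -> admissible v lt -> (forall x y, x != y -> 0 < turnout v x y) ->
  top_dominant v X -> forall x y, x \in X -> y != x -> 0 < v x y.
Proof.
move=> Hv Hadm Ht [[c0 Hc] Htop] x y xX yx.
have Hadm' := Hadm; case: Hadm' => [st H1 H2 H3 H4].
have Hnn : forall a b, a != b -> 0 <= v a b by move=> a b; apply: nonneg.
have [m Hm] := exists_min x st.
have edge : forall a b, lt a b -> 0 < v a b.
  move=> a b ab; have := Ht a b (lt_neq st ab); have := H1 a b ab.
  rewrite /turnout; lra.
have mX : m \in X.
  apply/idPn => mX.
  pose C := [set z | asb (irr_equiv v m z)].
  have compC : irr_component v C by exists m => z; rewrite inE; apply: asbP.
  have mC : m \in C by rewrite inE; apply/asbP; left.
  have CX : C != X by apply/eqP => e; move: mX; rewrite -e mC.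
  have [a [b [aX bC dab]]] := Htop C compC CX.
  have ab := dominates_neq dab; case: dab => _ zba.
  have ba : b != a by rewrite eq_sym.
  have nr : ~ reach v b a by apply/(ind_zero_reach ba (Hnn _ _ ba)).
  apply: nr.
  have am : a != m by apply/eqP => e; move: mX; rewrite -e aX.
  have rma : reach v m a by apply: reach_edge; [rewrite eq_sym | apply: edge; apply: Hm].
  move: bC; rewrite inE => /asbP [<-//|[_ pbm]].
  case: (eqVneq b m) => [->//|bm].
  by apply: reach_trans rma; apply/ind_pos_reach.
have asym : forall a b, lt a b -> lt b a -> False.
  move=> a b ab ba; case: st => [irr tr _].
  by have := tr _ _ _ ab ba; rewrite (negbTE (irr a)).
rewrite ltNge; apply/negP => vxyle.
case: (lt_total_cases y x st) => [e|lyx|lxy]; first by rewrite e eqxx in yx.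
  have vxy0 : v x y = 0.
    apply/eqP; rewrite eq_le vxyle; apply: Hnn; by rewrite eq_sym.
  pose P := fun c => lt c x && (v x c == 0).
  have Py : P y by rewrite /P lyx vxy0 eqxx.
  case: (arg_maxnP (rank lt) Py) => y0 /andP[y0x /eqP vxy00] y0max.
  have A : forall c, lt y0 c -> v c y0 <= 0.
    move=> c y0c; case: (lt_total_cases c x st) => [->|cx|xc].
    - by rewrite vxy00.
    - rewrite leNgt; apply/negP => vcy0.
      have e := H3 _ _ _ y0c cx; rewrite vxy00 in e.
      have vxc : v x c = 0.
        apply/eqP; rewrite eq_le Hnn ?andbT; last first.
          by rewrite eq_sym; apply: lt_neq st cx.
        rewrite leNgt; apply/negP => vxc.
        by have := lt_min 0 (v x c) (v c y0); rewrite -e vxc vcy0 ltxx.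
      have := y0max c; rewrite /P cx vxc eqxx => /(_ isT) /=.
      by rewrite leqNgt (rank_lt st y0c).
    - by rewrite (H3 _ _ _ y0x xc) -vxy00 min_le_r.
  have clos : forall c d, lt y0 c -> ~~ lt y0 d -> c != d -> v c d <= 0.
    move=> c d y0c ny0d cd; case: (lt_total_cases d y0 st) => [->|dy0|y0d].
    - exact: A.
    - by rewrite (H3 _ _ _ dy0 y0c); apply: le_trans (A _ y0c); apply: min_le_l.
    - by rewrite y0d in ny0d.
  have pathU : forall p a, path (fun a b => (a != b) && (0 < v a b)) a p ->
      lt y0 a -> lt y0 (last a p).
    elim=> [//|b p IH] a /= /andP[/andP[ab vab] pp] y0a.
    apply: IH pp _; apply/idPn => nb.
    by have := clos _ _ y0a nb ab; rewrite leNgt vab.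
  have xm : x != m.
    apply/eqP => e; subst x.
    have ym : y != m by apply: lt_neq st lyx.
    by apply: (asym _ _ lyx); apply: Hm.
  have [p [_ [lp pp]]] : reach v x m.
    by apply: (comp_reach (proj1 (Hc x) xX) (proj1 (Hc m) mX)).
  have := pathU p x pp (y0x); rewrite lp => y0m.
  case: (eqVneq y0 m) => [e|y0m'].
    by subst y0; case: st => irr _ _; rewrite (negbTE (irr m)) in y0m.
  by apply: (asym _ _ y0m); apply: Hm.
by have := edge _ _ lxy; rewrite ltNge vxyle.
Qed.

Lemma divle (R : realFieldType) (a b s t : R) :
  0 < s -> 0 < t -> a * t <= b * s -> a / s <= b / t.
Proof.
move=> s0 t0 h; rewrite ler_pdivrMr // mulrAC ler_pdivlMr //.
Qed.

Lemma key_ineq (R : realFieldType) (a a' b b' : R) :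
  0 <= a' -> 0 <= b -> a' <= a -> b <= b' -> a' * b <= a * b'.
Proof. by move=> ha hb h1 h2; apply: ler_pM. Qed.

Lemma irr_equiv_ext (R : realFieldType) (T : finType) (w w' : T -> T -> R) a b :
  (forall a b, a != b -> (0 < w a b) = (0 < w' a b)) ->
  irr_equiv w a b -> irr_equiv w' a b.
Proof.
move=> H [->|[p1 p2]]; first by left.
case: (eqVneq a b) => [->|ab]; first by left.
have ba : b != a by rewrite eq_sym.
right; split.
  apply/(ind_pos_reach _ ab); apply: (reach_ext H); exact/(ind_pos_reach _ ab).
apply/(ind_pos_reach _ ba); apply: (reach_ext H); exact/(ind_pos_reach _ ba).
Qed.

Lemma top_ext (R : realFieldType) (T : finType) (w w' : T -> T -> R) X :
  (forall a b, a != b -> 0 <= w a b) -> (forall a b, a != b -> 0 <= w' a b) ->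
  (forall a b, a != b -> (0 < w a b) = (0 < w' a b)) ->
  top_dominant w X -> top_dominant w' X.
Proof.
move=> n1 n2 H [[c Hc] Htop].
have H' : forall a b, a != b -> (0 < w' a b) = (0 < w a b) by move=> a b /H ->.
split.
  exists c => z; split => [/Hc|h]; first exact: irr_equiv_ext.
  by apply/Hc; apply: irr_equiv_ext H' h.
move=> Y [d Hd] YX.
have compY : irr_component w Y.
  exists d => z; split => [/Hd|h]; first exact: irr_equiv_ext.
  by apply/Hd; apply: irr_equiv_ext H h.
have [a [b [aX bY dab]]] := Htop Y compY YX.
have ab := dominates_neq dab; have ba : b != a by rewrite eq_sym.
case: dab => p z.
exists a, b; split => //; split.
  apply/(ind_pos_reach _ ab); apply: (reach_ext H); exact/(ind_pos_reach _ ab).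
apply/(ind_zero_reach ba (n2 _ _ ba)) => r; apply: (proj1 (ind_zero_reach ba (n1 _ _ ba)) z).
exact: reach_ext H' r.
Qed.

Theorem proposition3p6 (R : realFieldType) (T : finType)
    (v : T -> T -> R) (lt : rel T)
    (Hv : llull v) (Hadm : admissible v lt) :
  (* (1) *)
  ((forall x y : T, x != y -> 0 < turnout v x y) ->
   let q := fun x y => v x y / turnout v x y in
   (forall x y, lt x y -> q y x <= q x y) /\
   (forall x y z, lt x y -> z != x -> z != y -> q y z <= q x z /\ q z x <= q z y) /\
   (forall X : {set T}, top_dominant v X ->
      top_dominant q X /\ (forall x y, x \in X -> y != x -> 0 < q x y)))
  /\
  (* (2) *)
  ((exists x y : T, x != y /\ turnout v x y = 0) ->
   exists Y : {set T},
     (forall x xb, x \notin Y -> xb \notin Y -> x != xb -> 0 < turnout v x xb) /\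
     (forall y x, y \in Y -> x != y -> v y x = 0)).
Proof.
split; last by move=> _; exact: (part2 Hv Hadm).
move=> Ht q.
have Hadm' := Hadm; case: Hadm' => [st H1 H2 H3 H4].
have Hnn : forall a b, a != b -> 0 <= v a b by move=> a b; apply: nonneg.
have tsym : forall a b, turnout v a b = turnout v b a by move=> a b; rewrite /turnout addrC.
have qpos : forall a b, a != b -> (0 < v a b) = (0 < q a b).
  by move=> a b ab; rewrite /q pmulr_lgt0 // invr_gt0; apply: Ht.
have qnn : forall a b, a != b -> 0 <= q a b.
  by move=> a b ab; rewrite /q divr_ge0 // ?Hnn // ltW // Ht.
split.
  move=> x y xy; have nxy := lt_neq st xy; have nyx : y != x by rewrite eq_sym.
  rewrite /q; apply: divle; rewrite ?Ht // tsym; apply: ler_wpM2r; last exact: H1.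
  by rewrite ltW // Ht.
split.
  move=> x y z xy zx zy.
  have nxy := lt_neq st xy.
  have xz : x != z by rewrite eq_sym.
  have yz : y != z by rewrite eq_sym.
  have K : v y z * v z x <= v x z * v z y.
    case: (lt_total_cases z x st) => [e|lzx|lxz]; first by rewrite e eqxx in zx.
      apply: key_ineq; rewrite ?Hnn //.
      + by rewrite (H3 _ _ _ lzx xy) min_le_r.
      + by rewrite (H2 _ _ _ lzx xy) max_ge_l.
    case: (lt_total_cases z y st) => [e|lzy|lyz]; first by rewrite e eqxx in zy.
      rewrite [v x z * _]mulrC; apply: ler_pM; rewrite ?Hnn //; exact: H1.
    apply: key_ineq; rewrite ?Hnn //.
    + by rewrite (H2 _ _ _ xy lyz) max_ge_r.
    + by rewrite (H3 _ _ _ xy lyz) min_le_l.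
  split; rewrite /q; apply: divle; rewrite ?Ht // 1?eq_sym //.
    rewrite /turnout; move: K (Hnn _ _ xz) (Hnn _ _ yz); nra.
  rewrite /turnout; move: K (Hnn _ _ xz) (Hnn _ _ yz); nra.
move=> X top; split.
  by apply: top_ext top => // a b /qpos.
move=> x y xX yx; rewrite -qpos; last by rewrite eq_sym.
exact: (top_pos Hv Hadm Ht top xX yx).
Qed.
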